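(* Let $w \in S_n$ with Lehmer code $L(w) = (L_1,\dots,L_n)$. If there is an index $i$ with $L_i - L_{i+1} \ge 2$, then the Schubert polynomial $\mathfrak{S}_w$ is not a standard elementary monomial.
   Context: The Lehmer code of $w$ is given by $L_i = |\{j > i : w(j) < w(i)\}|$. $e^i_j$ is the elementary symmetric polynomial of degree $j$ in $x_1,\dots,x_i$; a standard elementary monomial is a product $e^1_{a_1}e^2_{a_2}\cdots$ with nonnegative integers $a_i$, finitely many nonzero. Schubert polynomials: $\mathfrak{S}_{w_0} = x_1^{n-1}\cdots x_{n-1}$ for the longest $w_0 \in S_n$, and $\partial_i\mathfrak{S}_w = \mathfrak{S}_{ws_i}$ if $\ell(ws_i)=\ell(w)-1$, $0$ otherwise, where $\partial_i f = (f-s_if)/(x_i-x_{i+1})$. *)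

(* Defs.v *)
From HB Require Import structures.
From mathcomp Require Import all_boot all_order all_algebra all_fingroup.
From mathcomp Require Import mpoly.
Set Implicit Arguments. Unset Strict Implicit. Unset Printing Implicit Defensive.
Import GRing.Theory.
Local Open Scope ring_scope.

(* Variables x_1..x_n are 'X_0 .. 'X_(n-1) (0-indexed). Coefficients in int. *)

Definition lehmer n (w : 'S_n) (i : 'I_n) : nat :=
  #|[set j : 'I_n | (i < j)%N && (w j < w i)%N]|.

Definition perm_length n (w : 'S_n) : nat :=
  #|[set p : 'I_n * 'I_n | (p.1 < p.2)%N && (w p.2 < w p.1)%N]|.

Definition simple_tr n (i : nat) (hi : (i.+1 < n)%N) : 'S_n :=
  tperm (Ordinal (ltnW hi)) (Ordinal hi).

(* composition w s_i as functions: x |-> w (s_i x); in MathComp's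
   perm group, (s * t) x = t (s x), so this is s_i * w. *)
Definition mul_s n (w : 'S_n) (i : nat) (hi : (i.+1 < n)%N) : 'S_n :=
  (simple_tr hi * w)%g.

Definition w0 n : 'S_n := perm (@rev_ord_inj n).

Definition stair_mono n : {mpoly int[n]} :=
  \prod_(i < n) 'X_i ^+ (n.-1 - i).

(* Schubert polynomials: a family S_w (w in S_n) with S_{w0} = x^delta and
   d_i S_w = S_{w s_i} if l(w s_i) = l(w) - 1, and 0 otherwise, where
   d_i f = (f - s_i f)/(x_i - x_{i+1}).  The division is expressed by the
   (unique, since {mpoly int[n]} is a domain) equation
   (x_i - x_{i+1}) * d_i f = f - s_i f.  Such a family exists and is unique. *)
Definition is_schubert_family n (S : 'S_n -> {mpoly int[n]}) : Prop :=
  S (w0 n) = stair_mono n /\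
  forall (w : 'S_n) (i : nat) (hi : (i.+1 < n)%N),
    ('X_(Ordinal (ltnW hi)) - 'X_(Ordinal hi)) *
      (if (perm_length (mul_s w hi)).+1 == perm_length w
       then S (mul_s w hi) else 0)
    = S w - msym (simple_tr hi) (S w).

Definition elem_sym n (i j : nat) : {mpoly int[n]} :=
  \sum_(h : {set 'I_n} | (#|h| == j) && [forall k in h, (k < i)%N])
     \prod_(k in h) 'X_k.

Definition is_std_elem_monomial n (p : {mpoly int[n]}) : Prop :=
  exists a : 'I_n -> nat, p = \prod_(k < n) elem_sym n k.+1 (a k).

(* Main.v *)
Require Import Defs.
From HB Require Import structures.
From mathcomp Require Import all_boot all_order all_algebra all_fingroup.
From mathcomp Require Import mpoly.
From mathcomp Require Import zify ring.
Set Implicit Arguments. Unset Strict Implicit. Unset Printing Implicit Defensive.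
Import GRing.Theory Num.Theory.
Local Open Scope ring_scope.

Section Poly.
Variable n : nat.
Implicit Types (s : 'S_n).

Lemma msymXU s (k : 'I_n) : msym s ('X_k : {mpoly int[n]}) = 'X_(s k).
Proof.
rewrite /msym mmapX /mmap1 (bigD1 k) //= mnm1E eqxx expr1 big1 ?mulr1 //.
by move=> x /negbTE nx; rewrite mnm1E eq_sym nx expr0.
Qed.

Lemma esym_perm s L m : (forall x : 'I_n, (s x < L)%N = (x < L)%N) ->
  msym s (elem_sym n L m) = elem_sym n L m.
Proof.
move=> sL; rewrite /elem_sym rmorph_sum /=.
under eq_bigr => h _ do rewrite rmorph_prod /=.
under eq_bigr => h _ do under eq_bigr => k _ do rewrite msymXU.
under eq_bigr => h _ do rewrite -(big_imset (fun k => ('X_k : {mpoly int[n]})) (in2W (@perm_inj _ s))) /=.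
symmetry.
rewrite (reindex (fun h : {set 'I_n} => s @: h)) /=; last first.
  exists (fun h : {set 'I_n} => s^-1%g @: h) => h _; rewrite -imset_comp -[RHS]imset_id;
  by apply: eq_imset => x /=; rewrite ?permK ?permKV.
apply: eq_bigl => h; rewrite card_imset; last exact: perm_inj.
congr (_ && _); apply/forallP/forallP => H x.
  apply/implyP => xh; have := H (s x); rewrite mem_imset ?xh /=; last exact: perm_inj.
  by rewrite sL.
apply/implyP => /imsetP [y yh ->]; rewrite sL; exact: (implyP (H y)).
Qed.

End Poly.
Section Poly.
Variable n : nat.

Lemma forall_lt_S (h : {set 'I_n}) (jo : 'I_n) :
  jo \notin h ->
  [forall k in h, (k < jo.+1)%N] = [forall k in h, (k < jo)%N].
Proof.
move=> jh; apply/forallP/forallP => H k; apply/implyP => kh; have := implyP (H k) kh.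
  rewrite ltnS leq_eqVlt => /orP [/eqP/val_inj ek|//].
  by move: jh; rewrite -ek kh.
by move=> /ltnW.
Qed.

Lemma esym_split (jo : 'I_n) m :
  elem_sym n jo.+1 m.+1 = elem_sym n jo m.+1 + 'X_jo * elem_sym n jo m.
Proof.
rewrite /elem_sym (bigID (fun h : {set 'I_n} => jo \in h)) /= addrC; congr (_ + _).
  apply: eq_bigl => h; case: (boolP (jo \in h)) => jh /=; last first.
    by rewrite andbT forall_lt_S.
  rewrite andbF; symmetry; apply/andP => [[_ /forallP /(_ jo)]].
  by rewrite jh ltnn.
rewrite mulr_sumr.
rewrite (reindex_onto (fun h' : {set 'I_n} => jo |: h') (fun h => h :\ jo)) /=;
  last by move=> h /andP [_ jh]; rewrite setD1K.
apply: eq_big => h'.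
  case: (boolP (jo \in h')) => jh.
    have -> : [forall k in h', (k < jo)%N] = false.
      by apply/negbTE/negP => /forallP /(_ jo); rewrite jh ltnn.
    have E1 : jo |: h' = h' by apply/setUidPr; rewrite sub1set.
    rewrite andbF E1; apply/negbTE; apply/negP => /andP [_ /eqP E].
    by move: jh; rewrite -E setD11.
  rewrite setU11 andbT setU1K // eqxx andbT cardsU1 jh add1n eqSS.
  congr (_ && _); rewrite -forall_lt_S //.
  apply/forallP/forallP => H k; apply/implyP => kh.
    by apply: (implyP (H k)); rewrite setU1r.
  move: kh; rewrite in_setU1 => /orP [/eqP -> //|kh]; exact: (implyP (H k)).
move=> /andP [_ /eqP jh]; by rewrite big_setU1 //= -jh setD11.
Qed.

End Poly.
Section Perm.
Variable n : nat.

Lemma str_val j (hj : (j.+1 < n)%N) (x : 'I_n) :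
  (simple_tr hj x : nat) = if (x : nat) == j then j.+1 else if (x : nat) == j.+1 then j else x.
Proof.
rewrite /simple_tr.
case: (eqVneq x (Ordinal (ltnW hj))) => [->|nx1]; first by rewrite tpermL /= eqxx.
case: (eqVneq x (Ordinal hj)) => [->|nx2].
  by rewrite tpermR /= eqxx; case: eqP => //; lia.
rewrite tpermD 1?eq_sym //.
case: eqP => [e|_]; first by move: nx1; rewrite -val_eqE /= e eqxx.
case: eqP => [e|_] //; by move: nx2; rewrite -val_eqE /= e eqxx.
Qed.


Lemma str_invol j (hj : (j.+1 < n)%N) (x : 'I_n) :
  simple_tr hj (simple_tr hj x) = x.
Proof. by rewrite /simple_tr tpermK. Qed.

Lemma mul_sE (w : 'S_n) j (hj : (j.+1 < n)%N) x : mul_s w hj x = w (simple_tr hj x).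
Proof. by rewrite /mul_s permM. Qed.

Lemma mul_sK (w : 'S_n) j (hj : (j.+1 < n)%N) : mul_s (mul_s w hj) hj = w.
Proof. by apply/permP => x; rewrite !mul_sE str_invol. Qed.

Lemma str_lt j (hj : (j.+1 < n)%N) (k : nat) (x : 'I_n) : k != j ->
  (simple_tr hj x < k.+1)%N = (x < k.+1)%N.
Proof.
move=> /eqP kj; rewrite str_val; case: eqP => e1; [|case: eqP => e2]; apply/idP/idP; lia.
Qed.

Lemma str_lt0 j (hj : (j.+1 < n)%N) (x : 'I_n) :
  (simple_tr hj x < j)%N = (x < j)%N.
Proof. rewrite str_val; case: eqP => e1; [|case: eqP => e2]; apply/idP/idP; lia. Qed.

Lemma mem_imset_invol (T : finType) (f : T -> T) (A : {set T}) x :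
  involutive f -> (x \in f @: A) = (f x \in A).
Proof.
move=> fK; apply/imsetP/idP => [[y yA ->]|fxA]; first by rewrite fK.
by exists (f x); rewrite ?fK.
Qed.

Lemma length_desc (w : 'S_n) j (hj : (j.+1 < n)%N) :
  (w (Ordinal hj) < w (Ordinal (ltnW hj)))%N ->
  (perm_length (mul_s w hj)).+1 = perm_length w.
Proof.
move=> dw; rewrite /perm_length.
set s := simple_tr hj.
pose phi := fun p : 'I_n * 'I_n => (s p.1, s p.2).
have phiK : involutive phi by move=> [a b]; rewrite /phi /= !str_invol.
have phi_inj : injective phi := can_inj phiK.
rewrite -(card_imset _ phi_inj).
set p0 := (Ordinal (ltnW hj), Ordinal hj).
have -> : phi @: [set p : 'I_n * 'I_n | (p.1 < p.2)%N && (mul_s w hj p.2 < mul_s w hj p.1)%N]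
   = [set p : 'I_n * 'I_n | (p.1 < p.2)%N && (w p.2 < w p.1)%N] :\ p0.
  apply/setP => [[a b]]; rewrite mem_imset_invol // !inE /= !mul_sE !str_invol.
  rewrite /p0 xpair_eqE -!val_eqE /=.
  case wab: (w b < w a)%N => /=; last by rewrite !andbF.
  have Hab : ~ ((a : nat) = j.+1 /\ (b : nat) = j).
    move=> [ea eb]; have ea' : a = Ordinal hj by apply: val_inj.
    have eb' : b = Ordinal (ltnW hj) by apply: val_inj.
    by move: wab; rewrite ea' eb' ltnNge (ltnW dw).
  rewrite !andbT !str_val.
  case: eqP => e1; case: eqP => e2; try case: eqP => e3; try case: eqP => e4; 
    try case: eqP => e5; lia.
rewrite [RHS](cardsD1 p0) !inE /= dw andbT ltnSn //.
Qed.

Lemma length_asc (w : 'S_n) j (hj : (j.+1 < n)%N) :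
  (w (Ordinal (ltnW hj)) < w (Ordinal hj))%N ->
  (perm_length (mul_s w hj)).+1 != perm_length w.
Proof.
move=> aw; have := @length_desc (mul_s w hj) j hj.
rewrite mul_sK !mul_sE.
have -> : simple_tr hj (Ordinal hj) = Ordinal (ltnW hj) by rewrite /simple_tr tpermR.
have -> : simple_tr hj (Ordinal (ltnW hj)) = Ordinal hj by rewrite /simple_tr tpermL.
move=> /(_ aw) <-; lia.
Qed.

End Perm.

Section Esym.
Variable n : nat.

Lemma card_range lo hi : (hi <= n)%N ->
  #|[set x : 'I_n | (lo <= x < hi)%N]| = (hi - lo)%N.
Proof.
elim: hi => [_|hi IH hin].
  by apply/eqP; rewrite cards_eq0; apply/eqP/setP => x; rewrite !inE ltn0 andbF.
case: (leqP lo hi) => lh.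
  have -> : [set x : 'I_n | (lo <= x < hi.+1)%N] =
     Ordinal hin |: [set x : 'I_n | (lo <= x < hi)%N].
    apply/setP => x; rewrite !inE -val_eqE /=; apply/idP/idP; lia.
  rewrite cardsU1 IH ?(ltnW hin) // !inE /= ltnn andbF /=; lia.
have -> : [set x : 'I_n | (lo <= x < hi.+1)%N] = [set x : 'I_n | (lo <= x < hi)%N].
  apply/setP => x; rewrite !inE; apply/idP/idP; lia.
rewrite IH ?(ltnW hin) //; lia.
Qed.

Lemma card_lt_le L : (#|[set x : 'I_n | (x < L)%N]| <= L)%N.
Proof.
case: (leqP L n) => Ln.
  have := card_range 0 Ln; rewrite subn0.
  have -> : [set x : 'I_n | (0 <= x < L)%N] = [set x : 'I_n | (x < L)%N] by [].
  by move=> ->.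
apply: leq_trans (ltnW Ln); rewrite -[X in (_ <= X)%N]card_ord; exact: max_card.
Qed.

Lemma esym0 L : elem_sym n L 0 = 1.
Proof.
rewrite /elem_sym (big_pred1 set0) ?big_set0 // => h /=.
rewrite cards_eq0; case: eqP => [->|] //=.
by apply/forallP => x; rewrite inE.
Qed.

Lemma esym_gt L m : (L < m)%N -> elem_sym n L m = 0.
Proof.
move=> Lm; rewrite /elem_sym big1 // => h /andP [/eqP ch /forallP H].
have : h \subset [set x : 'I_n | (x < L)%N].
  by apply/subsetP => x xh; rewrite inE; exact: (implyP (H x)).
move/subset_leq_card; rewrite ch => /leq_trans /(_ (card_lt_le L)); lia.
Qed.

Lemma esym_ne0 L m : (m <= L)%N -> (L <= n)%N -> elem_sym n L m != 0.
Proof.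
move=> mL Ln; apply/negP => /eqP /(congr1 (meval (fun _ => 1))).
rewrite meval0 /elem_sym rmorph_sum /=.
have E (h : {set 'I_n}) : meval (fun _ => 1) (\prod_(k in h) ('X_k : {mpoly int[n]})) = 1.
  rewrite rmorph_prod /= (eq_bigr (fun _ => 1)) ?prodr_const ?expr1n // => k _.
  by rewrite mevalXU.
under eq_bigr => h _ do rewrite E.
rewrite sumr_const => /eqP; rewrite pnatr_eq0 => /eqP /card0_eq /=.
move=> /(_ [set x : 'I_n | (x < m)%N]); rewrite [in RHS]inE /= => /negbT /negP; apply.
have := card_range 0 (leq_trans mL Ln); rewrite subn0.
have -> : [set x : 'I_n | (0 <= x < m)%N] = [set x : 'I_n | (x < m)%N] by [].
move=> cm; rewrite unfold_in /= cm eqxx /=; apply/forallP => x; apply/implyP; rewrite inE; lia.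
Qed.

End Esym.

Definition Emon n (a : 'I_n -> nat) : {mpoly int[n]} := \prod_(k < n) elem_sym n k.+1 (a k).

Section Diff.
Variables (n j : nat) (hj : (j.+1 < n)%N).
Local Notation jo := (Ordinal (ltnW hj)).
Local Notation j1 := (Ordinal hj).
Local Notation s := (simple_tr hj).

Definition Frest (a : 'I_n -> nat) : {mpoly int[n]} :=
  \prod_(k < n | k != jo) elem_sym n k.+1 (a k).

Lemma Emon_split a : Emon a = elem_sym n j.+1 (a jo) * Frest a.
Proof. by rewrite /Emon (bigD1 jo). Qed.

Lemma Frest_sym a : msym s (Frest a) = Frest a.
Proof.
rewrite /Frest rmorph_prod; apply: eq_bigr => k kj; apply: esym_perm => x.
apply: str_lt; move: kj; apply: contra => /eqP e; apply/eqP/val_inj => /=; exact e.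
Qed.

Lemma msym_sX : msym s ('X_jo : {mpoly int[n]}) = 'X_j1.
Proof. by rewrite msymXU /simple_tr tpermL. Qed.

Lemma Emon_diff a m : a jo = m.+1 ->
  Emon a - msym s (Emon a) = ('X_jo - 'X_j1) * (elem_sym n j m * Frest a).
Proof.
move=> am; rewrite Emon_split msymM Frest_sym am.
have := esym_split jo m; rewrite /= => ->.
rewrite msymD msymM msym_sX !esym_perm; try exact: str_lt0.
ring.
Qed.

Lemma Emon_sym0 a : a jo = 0%N -> msym s (Emon a) = Emon a.
Proof. by move=> a0; rewrite Emon_split msymM Frest_sym a0 esym0 msym1. Qed.

End Diff.

Section Incr.
Variable n : nat.

Lemma incr_id (w : 'S_n) :
  (forall j (hj : (j.+1 < n)%N), (w (Ordinal (ltnW hj)) < w (Ordinal hj))%N) ->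
  w = 1%g.
Proof.
move=> inc.
have low : forall k (hk : (k < n)%N), (k <= w (Ordinal hk))%N.
  elim=> [//|k IH] hk; have := inc k hk.
  move: (IH (ltnW hk)); lia.
have up : forall d k (hk : (k < n)%N), (k + d).+1 = n -> (w (Ordinal hk) <= k)%N.
  elim=> [|d IH] k hk e.
    have := ltn_ord (w (Ordinal hk)); lia.
  have hk1 : (k.+1 < n)%N by lia.
  have := IH k.+1 hk1 ltac:(lia); have := inc k hk1.
  have -> : Ordinal (ltnW hk1) = Ordinal hk by apply: val_inj.
  lia.
apply/permP => x; rewrite perm1; apply: val_inj => /=.
have hx := ltn_ord x.
have h1 := low x hx; have h2 := up (n - x.+1)%N x hx ltac:(lia).
have e : Ordinal hx = x by apply: val_inj.
rewrite e in h1 h2; lia.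
Qed.

End Incr.

Section Schub.
Variables (n : nat) (S : 'S_n -> {mpoly int[n]}) (HS : is_schubert_family S).

Lemma C_desc (w : 'S_n) j (hj : (j.+1 < n)%N) :
  (w (Ordinal hj) < w (Ordinal (ltnW hj)))%N ->
  ('X_(Ordinal (ltnW hj)) - 'X_(Ordinal hj)) * S (mul_s w hj) =
  S w - msym (simple_tr hj) (S w).
Proof. by move=> d; have := HS.2 w j hj; rewrite (length_desc d) eqxx. Qed.

Lemma C_asc (w : 'S_n) j (hj : (j.+1 < n)%N) :
  (w (Ordinal (ltnW hj)) < w (Ordinal hj))%N ->
  msym (simple_tr hj) (S w) = S w.
Proof.
move=> d; have := HS.2 w j hj; rewrite (negbTE (length_asc d)) mulr0.
by move/eqP; rewrite eq_sym subr_eq0 => /eqP.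
Qed.

Lemma Xdiff_neq0 j (hj : (j.+1 < n)%N) :
  ('X_(Ordinal (ltnW hj)) - 'X_(Ordinal hj) : {mpoly int[n]}) != 0.
Proof.
rewrite subr_eq0; apply/negP => /eqP /(congr1 (mcoeff U_(Ordinal (ltnW hj)))).
rewrite !mcoeffXU eqxx -val_eqE /=; case: eqP => //; lia.
Qed.

Lemma cancelX j (hj : (j.+1 < n)%N) (p q : {mpoly int[n]}) :
  ('X_(Ordinal (ltnW hj)) - 'X_(Ordinal hj)) * p =
  ('X_(Ordinal (ltnW hj)) - 'X_(Ordinal hj)) * q -> p = q.
Proof. exact: (mulfI (Xdiff_neq0 hj)). Qed.

Lemma S_zero_id (v : 'S_n) : S v = 0 -> S 1%g = 0.
Proof.
move Hl : (perm_length v) => l; elim: l v Hl => [|l IH] v Hl Sv.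
  case: (boolP [forall j : 'I_n, forall k : 'I_n, (j.+1 == k) ==> (v j < v k)%N]) => H.
    have ev : v = 1%g.
      apply: incr_id => j hj.
      by have := forallP (forallP H (Ordinal (ltnW hj))) (Ordinal hj); rewrite /= eqxx.
    by rewrite -ev.
  exfalso.
  case/forallPn: H => j /forallPn [k]; rewrite negb_imply => /andP [/eqP jk].
  have hj : (j.+1 < n)%N by rewrite jk.
  rewrite -leqNgt => d.
  have ej : j = Ordinal (ltnW hj) by apply: val_inj.
  have ek : k = Ordinal hj by apply: val_inj.
  rewrite ej ek in d.
  have : (perm_length (mul_s v hj)).+1 = perm_length v.
    apply: length_desc; rewrite ltn_neqAle d andbT.
    by apply/negP => /eqP /val_inj /perm_inj /(congr1 val) /=; lia.
  by rewrite Hl.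
case: (boolP [forall j : 'I_n, forall k : 'I_n, (j.+1 == k) ==> (v j < v k)%N]) => H.
  have ev : v = 1%g.
    apply: incr_id => j hj.
    by have := forallP (forallP H (Ordinal (ltnW hj))) (Ordinal hj); rewrite /= eqxx.
  by rewrite -ev.
case/forallPn: H => j /forallPn [k]; rewrite negb_imply => /andP [/eqP jk].
have hj : (j.+1 < n)%N by rewrite jk.
rewrite -leqNgt => d.
have ej : j = Ordinal (ltnW hj) by apply: val_inj.
have ek : k = Ordinal hj by apply: val_inj.
rewrite ej ek in d.
have dd : (v (Ordinal hj) < v (Ordinal (ltnW hj)))%N.
  rewrite ltn_neqAle d andbT.
  by apply/negP => /eqP /val_inj /perm_inj /(congr1 val) /=; lia.
apply: (IH (mul_s v hj)).
  by have := length_desc dd; rewrite Hl => -[].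
have := C_desc dd; rewrite Sv msym0 subr0 => /eqP; rewrite mulf_eq0 (negbTE (Xdiff_neq0 hj)) /= => /eqP.
by [].
Qed.

End Schub.

Lemma Emon_ext n (a b : 'I_n -> nat) : a =1 b -> Emon a = Emon b.
Proof. by move=> e; apply: eq_bigr => k _; rewrite e. Qed.

Section Move.
Variables (n : nat) (S : 'S_n -> {mpoly int[n]}) (HS : is_schubert_family S).

Definition amove (a : 'I_n -> nat) j m : 'I_n -> nat :=
  fun k => if (k : nat) == j then 0%N else if (k : nat).+1 == j then m else a k.

Lemma move_E (w : 'S_n) j (hj : (j.+1 < n)%N) (a : 'I_n -> nat) m :
  S w = Emon a -> (w (Ordinal hj) < w (Ordinal (ltnW hj)))%N ->
  a (Ordinal (ltnW hj)) = m.+1 ->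
  (forall k : 'I_n, (k : nat).+1 = j -> a k = 0%N) -> (j = 0%N -> m = 0%N) ->
  S (mul_s w hj) = Emon (amove a j m).
Proof.
move=> Sw dw am aprev j0.
have := C_desc HS dw; rewrite Sw (Emon_diff am) => /cancelX ->.
rewrite (Emon_split hj) /amove /= eqxx esym0 mul1r /Frest.
case: j hj dw am aprev j0 => [|j'] hj dw am aprev j0.
  rewrite j0 // esym0 mul1r; apply: eq_bigr => k kj.
  by rewrite ifF ?ifF //; apply/negbTE; move: kj; apply: contra => /eqP e;
    apply/eqP/val_inj; rewrite /= e.
have hj' : (j' < n)%N by lia.
have ne : Ordinal hj' != Ordinal (ltnW hj) by rewrite -val_eqE /=; lia.
rewrite [in LHS](bigD1 (Ordinal hj')) // [in RHS](bigD1 (Ordinal hj')) //=.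
rewrite aprev // esym0 mul1r eqxx ifF; last by apply/negbTE; lia.
congr (_ * _); apply: eq_bigr => k /andP [kj kj'].
rewrite ifF; last by apply/negbTE; move: kj; apply: contra => /eqP e;
  apply/eqP/val_inj; rewrite /= e.
rewrite ifF //; apply/negbTE; move: kj'; apply: contra => /eqP e.
by apply/eqP/val_inj; rewrite /=; lia.
Qed.

Hypothesis NZ : forall v, S v != 0.

Lemma E_le (v : 'S_n) a k : S v = Emon a -> (a k <= k.+1)%N.
Proof.
move=> Sv; rewrite leqNgt; apply/negP => gt.
have := NZ v; rewrite Sv /Emon (bigD1 k) //= esym_gt // mul0r eqxx.
by [].
Qed.

Lemma E_asc (v : 'S_n) a j (hj : (j.+1 < n)%N) : S v = Emon a ->
  (v (Ordinal (ltnW hj)) < v (Ordinal hj))%N -> a (Ordinal (ltnW hj)) = 0%N.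
Proof.
move=> Sv av; case am: (a (Ordinal (ltnW hj))) => [//|m].
have := C_asc HS av; rewrite Sv => /eqP; rewrite eq_sym -subr_eq0 (Emon_diff am).
rewrite !mulf_eq0 (negbTE (Xdiff_neq0 hj)) /=.
have ml : (m <= j)%N by have := E_le (Ordinal (ltnW hj)) Sv; rewrite am.
rewrite (negbTE (esym_ne0 ml (ltnW (ltnW hj)))) /=.
have := NZ v; rewrite Sv (Emon_split hj) mulf_eq0 negb_or => /andP [_ /negbTE ->].
by [].
Qed.

Lemma E_desc (v : 'S_n) a j (hj : (j.+1 < n)%N) : S v = Emon a ->
  (v (Ordinal hj) < v (Ordinal (ltnW hj)))%N -> (0 < a (Ordinal (ltnW hj)))%N.
Proof.
move=> Sv dv; rewrite lt0n; apply/negP => /eqP a0.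
have := C_desc HS dv; rewrite Sv (Emon_sym0 a0) subrr => /eqP.
by rewrite mulf_eq0 (negbTE (Xdiff_neq0 hj)) (negbTE (NZ _)).
Qed.

End Move.

Section Stair.
Variable n : nat.

Lemma esym_full L : (L <= n)%N ->
  elem_sym n L L = \prod_(x : 'I_n | (x < L)%N) 'X_x.
Proof.
move=> Ln; have cT : #|[set x : 'I_n | (x < L)%N]| = L.
  by have := card_range 0 Ln; rewrite subn0.
rewrite /elem_sym (big_pred1 [set x : 'I_n | (x < L)%N]) => [|h].
  by apply: eq_bigl => x; rewrite inE.
rewrite /=; apply/andP/eqP => [[/eqP ch /forallP H]|->].
  apply/eqP; rewrite eqEcard ch cT leqnn andbT.
  by apply/subsetP => x xh; rewrite inE; exact: (implyP (H x)).
split; first by rewrite cT.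
by apply/forallP => x; rewrite inE; apply/implyP.
Qed.

Lemma stair_Emon : stair_mono n = Emon (fun p : 'I_n => if (p.+1 < n)%N then p.+1 else 0%N).
Proof.
rewrite /Emon.
have E1 : forall k : 'I_n, elem_sym n k.+1 (if (k.+1 < n)%N then k.+1 else 0%N)
   = \prod_(x < n) (if (x < k.+1)%N && (k.+1 < n)%N then 'X_x else 1).
  move=> k; case: ifP => kn.
    rewrite esym_full ?(ltnW kn) // big_mkcond /=; apply: eq_bigr => x _.
    by rewrite andbT.
  by rewrite esym0 big1 // => x _; rewrite andbF.
rewrite (eq_bigr _ (fun k _ => E1 k)) exchange_big /= /stair_mono.
apply: eq_bigr => x _; rewrite -big_mkcond /= prodr_const.
congr (_ ^+ _).
have := card_range x (leq_pred n); set A := [set _ | _] => <-.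
apply: eq_card => k; rewrite /A !inE unfold_in /=; apply/idP/idP; lia.
Qed.

End Stair.

Definition Uf (n k m p : nat) : nat :=
  if (p < m)%N then (n - 1 - k + p)%N else if p == m then (n - 2 - k)%N
  else if (p <= k.+1)%N then (n - 2 - k + p)%N else (n - 1 - p)%N.
Definition Af (n k m p : nat) : nat :=
  if (p <= k)%N then (if p.+1 == m then m else 0%N)
  else (if (p.+1 < n)%N then p.+1 else 0%N).

Section Chain.
Variables (n : nat) (S : 'S_n -> {mpoly int[n]}) (HS : is_schubert_family S).
Hypothesis hn : (1 < n)%N.

Definition Q k m := exists u : 'S_n, (forall p : 'I_n, (u p : nat) = Uf n k m p) /\
  S u = Emon (fun p : 'I_n => Af n k m p).

Lemma Q_base : Q 0 1.
Proof.
exists (w0 n); split.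
  move=> p; rewrite /w0 permE /= /Uf; do ! case: ifP => ?; lia.
rewrite HS.1 stair_Emon; apply: Emon_ext => p /=.
rewrite /Af; do ! case: ifP => ?; lia.
Qed.

Lemma Q_step k m : (k.+2 <= n)%N -> (m <= k)%N -> Q k m.+1 -> Q k m.
Proof.
move=> kn mk [u [Hu Su]].
have hm : (m.+1 < n)%N by lia.
have du : (u (Ordinal hm) < u (Ordinal (ltnW hm)))%N.
  rewrite !Hu /Uf /=; do ! case: ifP => ?; lia.
have am : (fun p : 'I_n => Af n k m.+1 p) (Ordinal (ltnW hm)) = m.+1.
  rewrite /Af /=; do ! case: ifP => ?; lia.
have := move_E HS Su du am.
move=> /(_ ltac:(move=> p /= e; rewrite /Af; do ! case: ifP => ?; lia) (fun e => e)) Su'.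
exists (mul_s u hm); split.
  move=> p; rewrite mul_sE Hu str_val.
  case: eqP => e1; [|case: eqP => e2]; rewrite /Uf; do ! case: ifP => ?; lia.
rewrite Su'; apply: Emon_ext => p; rewrite /amove /Af /=; do ! case: ifP => ?; lia.
Qed.

Lemma Q_next k : (k.+3 <= n)%N -> Q k 0 -> Q k.+1 k.+2.
Proof.
move=> kn [u [Hu Su]]; exists u; split.
  move=> p; rewrite Hu /Uf; do ! case: ifP => ?; lia.
rewrite Su; apply: Emon_ext => p; rewrite /Af /=; do ! case: ifP => ?; lia.
Qed.

Lemma Q_all k : (k.+2 <= n)%N -> Q k 0.
Proof.
elim: k => [|k IH] kn.
  have : forall d, (d <= 1)%N -> Q 0 (1 - d).
    elim=> [_|d IHd dl]; first exact: Q_base.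
    apply: Q_step; [lia|lia|]; have -> : ((1 - d.+1).+1 = 1 - d)%N by lia.
    by apply: IHd; lia.
  by move=> /(_ 1%N (leqnn 1)).
have Hs : Q k.+1 k.+2 by apply: Q_next; [lia| apply: IH; lia].
have : forall d, (d <= k.+2)%N -> Q k.+1 (k.+2 - d).
  elim=> [_|d IHd dl]; first by rewrite subn0.
  apply: Q_step; [lia|lia|]; have -> : ((k.+2 - d.+1).+1 = k.+2 - d)%N by lia.
  by apply: IHd; lia.
by move=> /(_ k.+2 (leqnn _)); rewrite subnn.
Qed.

Lemma S1_eq1 : S 1%g = 1.
Proof.
have [u [Hu Su]] := Q_all (k := (n - 2)%N) ltac:(lia).
have -> : (1%g : 'S_n) = u.
  apply/permP => p; rewrite perm1; apply: val_inj; rewrite /= Hu /Uf.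
  have := ltn_ord p; do ! case: ifP => ?; lia.
rewrite Su /Emon big1 // => p _; rewrite /Af.
have -> : (if (p <= n - 2)%N then if p.+1 == 0%N then 0%N else 0%N
           else if (p.+1 < n)%N then p.+1 else 0%N) = 0%N.
  have := ltn_ord p; do ! case: ifP => ?; lia.
exact: esym0.
Qed.

Lemma S_neq0 (v : 'S_n) : S v != 0.
Proof.
apply/negP => /eqP /(S_zero_id HS); rewrite S1_eq1 => /eqP; by rewrite oner_eq0.
Qed.

End Chain.

Section WV.
Variable n : nat.

Definition wv (w : 'S_n) (p : nat) : nat := oapp (fun o : 'I_n => val (w o)) 0%N (insub p).

Lemma wvO (w : 'S_n) p (hp : (p < n)%N) : wv w p = w (Ordinal hp).
Proof. by rewrite /wv insubT. Qed.

Lemma wv_ord (w : 'S_n) (o : 'I_n) : wv w o = w o.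
Proof. by rewrite /wv valK. Qed.

Lemma wv_inj (w : 'S_n) p q : (p < n)%N -> (q < n)%N -> wv w p = wv w q -> p = q.
Proof.
move=> hp hq; rewrite (wvO w hp) (wvO w hq) => /val_inj /perm_inj.
by move/(congr1 val).
Qed.

Lemma wv_mul (w : 'S_n) j (hj : (j.+1 < n)%N) p : (p < n)%N ->
  wv (mul_s w hj) p = wv w (if p == j then j.+1 else if p == j.+1 then j else p).
Proof.
move=> hp; rewrite (wvO _ hp) mul_sE -wv_ord str_val //.
Qed.

End WV.

Definition sw (j p : nat) : nat := if p == j then j.+1 else if p == j.+1 then j else p.

Lemma swE (j p : nat) : p != j -> p != j.+1 -> sw j p = p.
Proof. by rewrite /sw => /negbTE -> /negbTE ->. Qed.
Lemma sw_j j : sw j j = j.+1. Proof. by rewrite /sw eqxx. Qed.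
Lemma sw_j1 j : sw j j.+1 = j. Proof. by rewrite /sw eqxx; case: eqP => //; lia. Qed.
Lemma sw_invol j p : sw j (sw j p) = p.
Proof.
case: (eqVneq p j) => [->|pj]; first by rewrite sw_j sw_j1.
case: (eqVneq p j.+1) => [->|pj1]; first by rewrite sw_j1 sw_j.
by rewrite !swE.
Qed.
Lemma sw_lt j p m : (p < m)%N -> (j.+1 < m)%N -> (sw j p < m)%N.
Proof. rewrite /sw; do ! case: ifP => ?; lia. Qed.
Lemma sw_ge j p m : (m <= j)%N -> (m <= p)%N -> (m <= sw j p)%N.
Proof. rewrite /sw; do ! case: ifP => ?; lia. Qed.

Section Core.
Variables (n : nat) (S : 'S_n -> {mpoly int[n]}) (HS : is_schubert_family S).
Hypothesis hn : (1 < n)%N.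

Let NZ := S_neq0 HS hn.

Definition Pat (w : 'S_n) (i : nat) := exists l, [/\ (i.+1 < l)%N, (l < n)%N,
  (wv w i.+1 < wv w l)%N & (wv w l < wv w i)%N].

Definition dsc (w : 'S_n) j := (j.+1 < n)%N && (wv w j.+1 < wv w j)%N.

Lemma wv_sw (w : 'S_n) j (hj : (j.+1 < n)%N) p : (p < n)%N ->
  wv (mul_s w hj) p = wv w (sw j p).
Proof. by move=> hp; rewrite wv_mul. Qed.

Lemma asc_of (w : 'S_n) k : (k.+1 < n)%N -> ~~ dsc w k -> (wv w k < wv w k.+1)%N.
Proof.
move=> hk; rewrite /dsc hk /= -leqNgt leq_eqVlt => /orP [/eqP e|//].
by have := wv_inj (ltnW hk) hk e; lia.
Qed.

Lemma allowed_move (w : 'S_n) a j (hj : (j.+1 < n)%N) : S w = Emon a ->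
  dsc w j -> (forall k, k.+1 = j -> ~~ dsc w k) ->
  exists a', S (mul_s w hj) = Emon a' /\
    (forall k : 'I_n, (k : nat) != j -> (k : nat).+1 != j -> a' k = a k).
Proof.
move=> Sw /andP [_ dj] pre.
have dw : (w (Ordinal hj) < w (Ordinal (ltnW hj)))%N.
  by move: dj; rewrite (wvO w hj) (wvO w (ltnW hj)).
have := E_desc HS NZ Sw dw; case am: (a (Ordinal (ltnW hj))) => [//|m] _.
have := move_E HS Sw dw am.
have ap : forall k : 'I_n, (k : nat).+1 = j -> a k = 0%N.
  move=> k kj; have hk : (k.+1 < n)%N by lia.
  have := asc_of hk (pre k kj); rewrite (wvO w hk) (wvO w (ltnW hk)) => ak.
  have := E_asc HS NZ Sw ak.
  by have -> : Ordinal (ltnW hk) = k by apply: val_inj.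
have j0 : j = 0%N -> m = 0%N.
  move=> e; have := E_le NZ (Ordinal (ltnW hj)) Sw; rewrite am /= e; lia.
move=> /(_ ap j0) Sw'; exists (amove a j m); split=> // k kj kj'.
by rewrite /amove (negbTE kj) (negbTE kj').
Qed.

Lemma no_desc_mono (w : 'S_n) lo hi : (hi < n)%N -> (lo <= hi)%N ->
  (forall j, (lo <= j < hi)%N -> ~~ dsc w j) -> (wv w lo <= wv w hi)%N.
Proof.
move=> hn' lh H.
have : forall d, (lo + d <= hi)%N -> (wv w lo <= wv w (lo + d))%N.
  elim=> [|d IH] e; first by rewrite addn0.
  have := IH ltac:(lia); have := asc_of (k := (lo + d)%N) ltac:(lia) (H (lo + d)%N ltac:(lia)).
  rewrite addnS; lia.
by move=> /(_ (hi - lo)%N ltac:(lia)); have -> : (lo + (hi - lo) = hi)%N by lia.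
Qed.

Lemma core N : forall (w : 'S_n) a i, perm_length w = N -> S w = Emon a -> Pat w i -> False.
Proof.
elim/ltn_ind: N => N IH w a i lw Sw Hp.
case: Hp => l [il ln h1 h2].
have mv : forall j (hj : (j.+1 < n)%N) i', dsc w j -> (forall k, k.+1 = j -> ~~ dsc w k) ->
    Pat (mul_s w hj) i' -> False.
  move=> j hj i' dj pre P'.
  have [a' [Sw' _]] := allowed_move hj Sw dj pre.
  have dw : (w (Ordinal hj) < w (Ordinal (ltnW hj)))%N.
    by move: dj => /andP [_]; rewrite (wvO w hj) (wvO w (ltnW hj)).
  have lt := length_desc dw.
  by apply: (IH (perm_length (mul_s w hj)) _ (mul_s w hj) a' i') => //; lia.
case: (boolP [exists j : 'I_n, (j < i)%N && dsc w j]) => [/existsP [j0' /andP [j0i dj0]]|nd].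
  have ex : exists j, (j < i)%N && dsc w j by exists j0'; rewrite j0i.
  case: (ex_minnP ex) => j0 /andP [j0i' dj0'] minj.
  have hj0 : (j0.+1 < n)%N by case/andP: dj0'.
  apply: (mv j0 hj0 i dj0').
    move=> k kj; apply/negP => dk; have := minj k; rewrite dk andbT.
    by move=> /(_ ltac:(lia)); lia.
  exists l; split => //; rewrite !wv_sw //; try lia.
    by rewrite !swE //; apply/eqP; lia.
  rewrite (swE (p := l)); try (apply/eqP; lia).
  case: (eqVneq i j0.+1) => [ei|ni].
    by rewrite ei sw_j1; move: dj0' => /andP [_]; rewrite -ei; lia.
  by rewrite swE //; apply/eqP; lia.
have ndi : forall k, (k < i)%N -> ~~ dsc w k.
  move=> k ki; apply/negP => dk; case/existsP: nd.
  by exists (Ordinal (ltn_trans ki (ltn_trans (ltnSn _) (ltn_trans il ln)))); rewrite /= ki.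
have hi : (i.+1 < n)%N by lia.
have hi2 : (i.+2 < n)%N by lia.
have di : dsc w i by rewrite /dsc hi /=; lia.
have prei : forall k, k.+1 = i -> ~~ dsc w k by move=> k ki; apply: ndi; lia.
case: (boolP (dsc w i.+1)) => di1.
  apply: (mv i hi i.+1 di prei).
  have dd : (wv w i.+2 < wv w i.+1)%N by case/andP: di1.
  have l2 : l != i.+2 by apply/eqP => e; move: h1 dd; rewrite e; lia.
  exists l; split; rewrite ?wv_sw //; try lia.
    by rewrite !swE //; apply/eqP; lia.
  by rewrite sw_j1 swE //; apply/eqP; lia.
have ai1 := asc_of hi2 di1.
case: (ltnP (wv w i.+2) (wv w i)) => c.
  have [a' [Sw' ha']] := allowed_move hi Sw di prei.
  have d' : (mul_s w hi (Ordinal hi2) < mul_s w hi (Ordinal (ltnW hi2)))%N.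
    rewrite -(wvO _ hi2) -(wvO _ (ltnW hi2)) !wv_sw // sw_j1 swE //; apply/eqP; lia.
  have := E_desc HS NZ Sw' d'; rewrite ha' /=; try lia.
  have a1 : (w (Ordinal (ltnW hi2)) < w (Ordinal hi2))%N.
    by rewrite -(wvO _ hi2) -(wvO _ (ltnW hi2)).
  by rewrite (E_asc HS NZ Sw a1).
have ex : exists j, (i.+2 <= j)%N && dsc w j.
  case: (boolP [exists j : 'I_n, (i.+2 <= j < l)%N && dsc w j]).
    by case/existsP => j /andP [/andP [j1 _] dj]; exists j; rewrite j1.
  move=> nd2; exfalso.
  have : (wv w i.+2 <= wv w l)%N.
    apply: no_desc_mono; [exact: ln | lia | ].
    move=> j /andP [j1 j2]; apply/negP => dj; case/existsP: nd2.
    by exists (Ordinal (ltn_trans j2 ln)); rewrite /= j1 j2.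
  lia.
case: (ex_minnP ex) => j1 /andP [ij1 dj1] minj.
have hj1 : (j1.+1 < n)%N by case/andP: dj1.
apply: (mv j1 hj1 i dj1).
  move=> k kj; apply/negP => dk.
  case: (eqVneq k i.+1) => [ek|nk]; first by move: di1; rewrite -ek dk.
  by have := minj k; rewrite dk andbT => /(_ ltac:(lia)); lia.
exists (sw j1 l); split.
- by apply: sw_ge; lia.
- by apply: sw_lt.
- by rewrite !wv_sw ?sw_lt // sw_invol swE //; apply/eqP; lia.
- rewrite !wv_sw ?sw_lt //; last lia.
  by rewrite sw_invol swE //; apply/eqP; lia.
Qed.

End Core.

Lemma lehmer_pat n (w : 'S_n) i (hi : (i.+1 < n)%N) :
  (lehmer w (Ordinal hi) + 2 <= lehmer w (Ordinal (ltnW hi)))%N -> Pat w i.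
Proof.
move=> hl.
case: (boolP [exists l : 'I_n, [&& (i.+1 < l)%N, (w (Ordinal hi) < w l)%N &
          (w l < w (Ordinal (ltnW hi)))%N]]).
  case/existsP => l /and3P [il h1 h2]; exists l; split => //.
    by rewrite (wvO w hi) wv_ord.
  by rewrite (wvO w (ltnW hi)) wv_ord.
move=> nex; exfalso; move: hl; rewrite /lehmer.
set A := [set j : 'I_n | _]; set B := [set j : 'I_n | _].
have sAB : B \subset Ordinal hi |: A.
  apply/subsetP => j; rewrite !inE /= => /andP [ij wj].
  case: (eqVneq j (Ordinal hi)) => //= nj.
  have ij' : (i.+1 < j)%N.
    move: nj; rewrite -val_eqE /=; lia.
  rewrite ij' /=; move: nex => /existsPn /(_ j); rewrite ij' wj andbT /= -leqNgt.
  rewrite leq_eqVlt => /orP [/eqP e|//].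
  by exfalso; move/eqP: nj; apply; apply/perm_inj/val_inj; exact: e.
have := subset_leq_card sAB; rewrite cardsU1; lia.
Qed.

Theorem lemma14 (n : nat) (S : 'S_n -> {mpoly int[n]})
  (HS : is_schubert_family S) (w : 'S_n) (i : nat) (hi : (i.+1 < n)%N) :
  (lehmer w (Ordinal hi) + 2 <= lehmer w (Ordinal (ltnW hi)))%N ->
  ~ is_std_elem_monomial (S w).
Proof.
move=> hl [a Ea].
have hn : (1 < n)%N by lia.
exact: (core HS hn (N := perm_length w) (w := w) (a := a) (i := i) erefl Ea (lehmer_pat hl)).
Qed.
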